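(* For every $k\ge1$, $|G_k|=|B_k|/2$.
   Context: Let $C_2=\{e,\sigma\}$ with $\sigma=(1,2)$. Define $B_1=C_2$ and $B_k=B_{k-1}\wr C_2$ for $k>1$, with elements written as wreath recursions $(g_1,g_2)\pi$, $g_1,g_2\in B_{k-1}$, $\pi\in C_2$, and multiplication $(g_1,g_2)\pi\cdot(h_1,h_2)\rho=(g_1h_{\pi(1)},g_2h_{\pi(2)})\pi\rho$. Define $G_1=\{e\}$ and, for $k>1$, $G_k=\{(g_1,g_2)\pi\in B_k : g_1g_2\in G_{k-1}\}$. *)

(* Defs.v *)
From mathcomp Require Import all_boot all_fingroup.
Set Implicit Arguments. Unset Strict Implicit. Unset Printing Implicit Defensive.

(* C_2 = 'S_2, the symmetric group on {1,2} (here 'I_2 = {0,1}, point 1 <-> ord0,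
   point 2 <-> ord_max).  BT k is the carrier of B_(k+1):
   BT 0 = C_2 = B_1, BT (k+1) = BT k * BT k * C_2, the triple (g1, g2, pi)
   standing for the wreath recursion (g1, g2) pi. *)
Fixpoint BT (k : nat) : finType :=
  if k is k'.+1 then ((BT k' * BT k') * 'S_2)%type : finType else 'S_2 : finType.

Definition pick_at {T : Type} (pi : 'S_2) (i : 'I_2) (h1 h2 : T) : T :=
  if pi i == ord0 then h1 else h2.

(* (g1,g2)pi * (h1,h2)rho = (g1 h_{pi(1)}, g2 h_{pi(2)}) pi rho *)
Fixpoint bmul (k : nat) : BT k -> BT k -> BT k :=
  match k return BT k -> BT k -> BT k with
  | 0 => fun x y => (x * y)%g
  | k'.+1 => fun x y =>
      let: (g1, g2, pi) := x in
      let: (h1, h2, rho) := y in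
      (bmul (g1) (pick_at pi ord0 h1 h2),
       bmul (g2) (pick_at pi ord_max h1 h2),
       (pi * rho)%g)
  end.

Fixpoint bone (k : nat) : BT k :=
  match k return BT k with
  | 0 => 1%g
  | k'.+1 => (bone k', bone k', 1%g)
  end.

(* membership in G_(k+1): G_1 = {e}, G_k = {(g1,g2)pi | g1 g2 \in G_(k-1)} *)
Fixpoint inG (k : nat) : BT k -> bool :=
  match k return BT k -> bool with
  | 0 => fun x => x == 1%g
  | k'.+1 => fun x => let: (g1, g2, _) := x in inG (bmul g1 g2)
  end.

Definition B (k : nat) : finType := BT k.-1.
Definition G (k : nat) : {set B k} := [set x : B k | inG (x : BT k.-1)].

(* Main.v *)
Require Import Defs.
From mathcomp Require Import all_boot all_fingroup.

Lemma perm2_split (pi : 'S_2) :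
  (pi ord0 == ord0) = ~~ (pi ord_max == ord0).
Proof.
have hne : pi ord0 != pi ord_max by rewrite (inj_eq perm_inj).
case: (pi ord0) hne => [[|[|a]] ha]; case: (pi ord_max) => [[|[|b]] hb] //=.
Qed.

Lemma bmul_inj (n : nat) (g : BT n) : injective (bmul g).
Proof.
elim: n g => [g|n IH [[g1 g2] pi]].
  by move=> x y /= /mulgI.
move=> [[h1 h2] rho] [[h1' h2'] rho'] /= [e1 e2 e3].
have := IH _ _ _ e1; have := IH _ _ _ e2.
rewrite /pick_at perm2_split.
have -> : rho = rho' by apply: (mulgI pi).
by case: (pi ord_max == ord0) => /= -> ->.
Qed.

Definition Gn (n : nat) : {set BT n} := [set x : BT n | inG x].

Lemma cardGn n : #|Gn n| * 2 = #|BT n|.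
Proof.
elim: n => [|n IH].
  rewrite /Gn /= card_Sn /=.
  have -> : [set x : 'S_2 | x == 1%g] = [set 1%g].
    by apply/setP => x; rewrite !inE.
  by rewrite cards1.
pose f := fun x : BT n.+1 =>
  (let: (g1, g2, pi) := x in (g1, bmul g1 g2, pi)) : BT n.+1.
have finj : injective f.
  move=> [[a1 a2] p] [[b1 b2] q] /= [e1 e2 e3]; subst b1 q.
  by rewrite (@bmul_inj _ _ _ _ e2).
have -> : Gn n.+1 = f @^-1: [set x : BT n.+1 | x.1.2 \in Gn n].
  apply/setP => [[[a1 a2] p]]; by rewrite !inE.
rewrite card_preimset //.
have -> : [set x : BT n.+1 | x.1.2 \in Gn n] =
  setX (setX [set: BT n] (Gn n)) [set: 'S_2].
  apply/setP => [[[a1 a2] p]]; by rewrite !inE /= andbT.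
rewrite (@cardsX (BT n * BT n)%type _) (@cardsX (BT n) (BT n)) !cardsT.
change #|BT n.+1| with #|{: (BT n * BT n) * 'S_2}|.
rewrite !card_prod card_Sn /= -IH.
rewrite -!mulnA; congr (_ * _); rewrite mulnC -!mulnA; congr (_ * _); by rewrite mulnC.
Qed.

Theorem mainTheorem11 : forall k : nat, 1 <= k -> #|G k| * 2 = #|B k|.
Proof.
by case=> // n _; exact: cardGn.
Qed.
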